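(* Let $p$ (true dynamics) and $\hat p$ (learned model) be dynamics kernels, and let $\pi_D$ (data-collecting policy) and $\pi$ be policies. Suppose $$\sup_{t\ge 0}\ \mathbb E_{s\sim d_t^{\pi_D},\,a\sim \pi_D(\cdot\mid s)}\Big[D_{TV}\big(p(\cdot\mid s,a),\hat p(\cdot\mid s,a)\big)\Big]\le \epsilon_m \qquad\text{and}\qquad \sup_{s\in\mathcal S} D_{TV}\big(\pi_D(\cdot\mid s),\pi(\cdot\mid s)\big)\le\epsilon_\pi .$$ Then, writing $\eta[\pi]=\eta(\pi,p)$ and $\hat\eta[\pi]=\eta(\pi,\hat p)$, $$\eta[\pi]\ \ge\ \hat\eta[\pi]-\frac{2\gamma r_{\max}(\epsilon_m+2\epsilon_\pi)}{(1-\gamma)^2}-\frac{4r_{\max}\epsilon_\pi}{1-\gamma}.$$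
   Context: Let $\mathcal S$ and $\mathcal A$ be countable (e.g. finite) state and action spaces, $\rho_0$ a probability distribution on $\mathcal S$ (initial state distribution), $\gamma\in(0,1)$ a discount factor, and $r:\mathcal S\times\mathcal A\to\mathbb R$ a reward function with $|r(s,a)|\le r_{\max}$ for all $(s,a)$. A policy is a Markov kernel $\pi(a\mid s)$ from $\mathcal S$ to $\mathcal A$; a dynamics kernel is a Markov kernel $q(s'\mid s,a)$ from $\mathcal S\times\mathcal A$ to $\mathcal S$. For a policy $\pi$ and dynamics $q$, the return is $\eta(\pi,q)=\sum_{t\ge0}\gamma^t\,\mathbb E[r(s_t,a_t)]$, where $s_0\sim\rho_0$, $a_t\sim\pi(\cdot\mid s_t)$, $s_{t+1}\sim q(\cdot\mid s_t,a_t)$. For probability distributions $\mu,\nu$ on a countable set, $D_{TV}(\mu,\nu)=\frac12\sum_x|\mu(x)-\nu(x)|$. Here $d_t^{\pi_D}$ denotes the distribution of $s_t$ when $s_0\sim\rho_0$, $a_i\sim\pi_D(\cdot\mid s_i)$, $s_{i+1}\sim p(\cdot\mid s_i,a_i)$ (the time-$t$ state marginal of $\pi_D$ under the true dynamics $p$). *)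

(* Defs.v *)
From Stdlib Require Import Reals ClassicalEpsilon.
From mathcomp Require Import ssreflect ssrfun ssrbool eqtype choice.

Open Scope R_scope.

Section Defs.
Variable T : countType.

(* The sequence n |-> f x if n encodes x, and 0 otherwise; it enumerates
   the values of f over the countable type T, each exactly once. *)
Definition enum_fun (f : T -> R) (n : nat) : R :=
  match @pickle_inv T n with Some x => f x | None => 0 end.

(* Sum over the countable set T (well defined for absolutely summable f;
   all sums used below are of this kind). *)
Definition csum (f : T -> R) : R :=
  epsilon (inhabits 0) (fun l => infinite_sum (enum_fun f) l).

Definition is_dist (mu : T -> R) : Prop :=
  (forall x, 0 <= mu x) /\ infinite_sum (enum_fun mu) 1.

Definition D_TV (mu nu : T -> R) : R :=
  / 2 * csum (fun x => Rabs (mu x - nu x)).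
End Defs.

Arguments csum {T}.
Arguments is_dist {T}.
Arguments D_TV {T}.

Section MDP.
Variables S A : countType.

(* policy pi(a|s) : S -> A -> R ; dynamics q(s'|s,a) : S -> A -> S -> R *)
Definition is_policy (pi : S -> A -> R) : Prop := forall s, is_dist (pi s).
Definition is_kernel (q : S -> A -> S -> R) : Prop :=
  forall s a, is_dist (q s a).

Fixpoint state_marg (rho0 : S -> R) (pi : S -> A -> R) (q : S -> A -> S -> R)
    (t : nat) : S -> R :=
  match t with
  | O => rho0
  | Datatypes.S t' => fun s' =>
      csum (fun s => state_marg rho0 pi q t' s *
                     csum (fun a => pi s a * q s a s'))
  end.

Definition expect_sa (d : S -> R) (pi : S -> A -> R) (f : S -> A -> R) : R :=
  csum (fun s => d s * csum (fun a => pi s a * f s a)).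

Definition ret (rho0 : S -> R) (gamma : R) (r : S -> A -> R)
    (pi : S -> A -> R) (q : S -> A -> S -> R) : R :=
  epsilon (inhabits 0) (fun l =>
    infinite_sum (fun t => gamma ^ t * expect_sa (state_marg rho0 pi q t) pi r) l).
End MDP.

Arguments is_policy {S A}.
Arguments is_kernel {S A}.
Arguments state_marg {S A}.
Arguments expect_sa {S A}.
Arguments ret {S A}.

(* Main.v *)
Require Import Defs.
From Stdlib Require Import Reals Lra FunctionalExtensionality ClassicalEpsilon Classical.
From mathcomp Require Import ssreflect ssrfun ssrbool eqtype choice.
From Coquelicot Require Import Coquelicot.
Open Scope R_scope.

Section Base.
Context {T : countType}.
Implicit Types f g w : T -> R.

Definition summ f := ex_series (fun n => Rabs (enum_fun T f n)).
Definition PN f (N : nat) := sum_n (enum_fun T f) N.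

Lemma ef_map1 (h : R -> R) f n : h 0 = 0 ->
  enum_fun T (fun x => h (f x)) n = h (enum_fun T f n).
Proof. move=> h0; rewrite /enum_fun; case: pickle_inv => //. Qed.

Lemma ef_map2 (h : R -> R -> R) f g n : h 0 0 = 0 ->
  enum_fun T (fun x => h (f x) (g x)) n = h (enum_fun T f n) (enum_fun T g n).
Proof. move=> h0; rewrite /enum_fun; case: pickle_inv => //. Qed.

Lemma ser_nonneg a : (forall n, 0 <= a n) -> ex_series a -> 0 <= Series a.
Proof.
move=> H Ha.
have -> : 0 = Series (fun n => 0 * a n) by rewrite Series_scal_l; ring.
apply: Series_le => // n; split; [lra| rewrite Rmult_0_l; exact: H].
Qed.

Lemma summ_ex {f} : summ f -> ex_series (enum_fun T f).
Proof. move=> H; exact: ex_series_Rabs. Qed.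

Lemma csum_eq f : ex_series (enum_fun T f) -> csum f = Series (enum_fun T f).
Proof.
move=> H. rewrite /csum.
have Hs : infinite_sum (enum_fun T f) (Series (enum_fun T f)).
  apply/is_series_Reals; exact: Series_correct.
have := epsilon_spec (inhabits 0) (fun l => infinite_sum (enum_fun T f) l)
  (ex_intro _ _ Hs).
move=> /is_series_Reals H2. by rewrite (is_series_unique _ _ H2).
Qed.

Lemma csum_eqS {f} : summ f -> csum f = Series (enum_fun T f).
Proof. move=> H; apply: csum_eq; exact: summ_ex. Qed.

Lemma csum_ext f g : (forall x, f x = g x) -> csum f = csum g.
Proof. move=> H. by rewrite (functional_extensionality f g H). Qed.

Lemma summ_ext {f g} : (forall x, f x = g x) -> summ f -> summ g.
Proof. move=> H. by rewrite (functional_extensionality f g H). Qed.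

Lemma summ_dom {f g} : (forall x, Rabs (f x) <= g x) -> summ g -> summ f.
Proof.
move=> H Hg. rewrite /summ.
apply: (ex_series_le _ (fun n => Rabs (enum_fun T g n))) => // n.
rewrite /norm /= /abs /= Rabs_Rabsolu /enum_fun.
case: pickle_inv => [x|]; last by rewrite Rabs_R0; lra.
apply: Rle_trans (H x) _. apply: Rle_abs.
Qed.

Lemma summ_abs {f} : summ f -> summ (fun x => Rabs (f x)).
Proof.
move=> H; rewrite /summ. apply: ex_series_ext H => n.
rewrite (ef_map1 Rabs) ?Rabs_R0 // Rabs_Rabsolu //.
Qed.

Lemma summ_plus {f g} : summ f -> summ g -> summ (fun x => f x + g x).
Proof.
move=> Hf Hg.
have Hs : summ (fun x => Rabs (f x) + Rabs (g x)).
  rewrite /summ. apply: (ex_series_ext (fun n => plus (Rabs (enum_fun T f n)) (Rabs (enum_fun T g n)))).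
    move=> n. rewrite (ef_map2 (fun a b => Rabs a + Rabs b)) ?Rabs_R0 ?Rplus_0_r //.
    rewrite /plus /=. rewrite [X in _ = X]Rabs_pos_eq //. apply: Rplus_le_le_0_compat; apply Rabs_pos.
  exact: ex_series_plus.
apply: summ_dom Hs => x. apply: Rabs_triang.
Qed.

Lemma summ_scal c {f} : summ f -> summ (fun x => c * f x).
Proof.
move=> Hf.
have Hs : summ (fun x => Rabs c * Rabs (f x)).
  rewrite /summ. apply: (ex_series_ext (fun n => scal (Rabs c) (Rabs (enum_fun T f n)))).
    move=> n. rewrite (ef_map1 (fun a => Rabs c * Rabs a)) ?Rabs_R0 ?Rmult_0_r //.
    rewrite /scal /= /mult /=. rewrite [X in _ = X]Rabs_pos_eq //. apply: Rmult_le_pos; apply Rabs_pos.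
  exact: ex_series_scal_l.
apply: summ_dom Hs => x. rewrite Rabs_mult; lra.
Qed.

Lemma summ_opp {f} : summ f -> summ (fun x => - f x).
Proof. move=> H. have := summ_scal (-1) H; apply: summ_ext => x; ring. Qed.

Lemma summ_minus {f g} : summ f -> summ g -> summ (fun x => f x - g x).
Proof. move=> Hf Hg. exact: (summ_plus Hf (summ_opp Hg)). Qed.


Lemma summ0 : summ (fun _ => 0).
Proof.
rewrite /summ. apply: (ex_series_ext (fun n => 0 * (/2)^n)).
  move=> n; rewrite /enum_fun; case: pickle_inv => [x|] /=; rewrite Rabs_R0; ring.
apply: (ex_series_scal_l (V := R_NormedModule) 0). apply: ex_series_geom.
rewrite Rabs_pos_eq; lra.
Qed.

Lemma csum_plus {f g} : summ f -> summ g -> csum (fun x => f x + g x) = csum f + csum g.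
Proof.
move=> Hf Hg. rewrite !csum_eqS //; last exact: summ_plus.
rewrite -Series_plus; try exact: summ_ex.
apply: Series_ext => n. by rewrite (ef_map2 Rplus) // Rplus_0_r.
Qed.

Lemma csum_scal c {f} : summ f -> csum (fun x => c * f x) = c * csum f.
Proof.
move=> Hf. rewrite !csum_eqS //; last exact: summ_scal.
rewrite -Series_scal_l. apply: Series_ext => n. by rewrite (ef_map1 (fun a => c * a)) // Rmult_0_r.
Qed.

Lemma csum_opp {f} : summ f -> csum (fun x => - f x) = - csum f.
Proof.
move=> Hf. rewrite -(csum_ext (fun x => -1 * f x)); last by move=> x; ring.
rewrite csum_scal //; ring.
Qed.

Lemma csum_minus {f g} : summ f -> summ g -> csum (fun x => f x - g x) = csum f - csum g.
Proof.
move=> Hf Hg. rewrite csum_plus //; last exact: summ_opp. rewrite csum_opp //.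
Qed.

Lemma csum0 : csum (fun _ : T => 0) = 0.
Proof.
rewrite -(csum_ext (fun x => 0 * 0)); last by move=> x; ring.
rewrite csum_scal; [ring | exact: summ0].
Qed.

Lemma csum_nonneg {f} : summ f -> (forall x, 0 <= f x) -> 0 <= csum f.
Proof.
move=> Hf H. rewrite csum_eqS //. apply: ser_nonneg; last exact: summ_ex.
move=> n; rewrite /enum_fun; case: pickle_inv => // *; lra.
Qed.

Lemma csum_le {f g} : summ f -> summ g -> (forall x, f x <= g x) -> csum f <= csum g.
Proof.
move=> Hf Hg H. have := csum_nonneg (summ_minus Hg Hf) (fun x => ltac:(have := H x; lra)).
rewrite csum_minus //; lra.
Qed.

Lemma csum_abs {f} : summ f -> Rabs (csum f) <= csum (fun x => Rabs (f x)).
Proof.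
move=> Hf. rewrite !csum_eqS //; last exact: summ_abs.
apply: Rle_trans (Series_Rabs _ Hf) _. right. apply: Series_ext => n.
by rewrite (ef_map1 Rabs) // Rabs_R0.
Qed.

Lemma csum_abs_le {f g} : summ f -> summ g -> (forall x, Rabs (f x) <= g x) ->
  Rabs (csum f) <= csum g.
Proof.
move=> Hf Hg H. apply: Rle_trans (csum_abs Hf) _. apply: csum_le => //. exact: summ_abs.
Qed.

Lemma sum_n_le' (a b : nat -> R) N : (forall n, a n <= b n) -> sum_n a N <= sum_n b N.
Proof.
move=> H; elim: N => [|N IH]; first by rewrite !sum_O.
rewrite !sum_Sn /plus /=. apply: Rplus_le_compat => //.
Qed.

Lemma PN_le {f g} N : (forall x, f x <= g x) -> PN f N <= PN g N.
Proof.
move=> H; apply: sum_n_le' => n. rewrite /enum_fun; case: pickle_inv => // *; lra.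
Qed.

Lemma PN_plus f g N : PN (fun x => f x + g x) N = PN f N + PN g N.
Proof.
rewrite /PN. have := sum_n_plus (enum_fun T f) (enum_fun T g) N. rewrite /plus /= => <-.
apply: sum_n_ext => n. by rewrite (ef_map2 Rplus) // Rplus_0_r.
Qed.

Lemma PN_scal c f N : PN (fun x => c * f x) N = c * PN f N.
Proof.
rewrite /PN. have := sum_n_scal_l c (enum_fun T f) N. rewrite /scal /= /mult /= => <-.
apply: sum_n_ext => n. by rewrite (ef_map1 (fun a => c * a)) // Rmult_0_r.
Qed.

Lemma PN_nonneg {f} N : (forall x, 0 <= f x) -> 0 <= PN f N.
Proof.
move=> H. have := PN_le N (f := fun _ => 0) H.
have -> : PN (fun _ => 0) N = 0 * PN f N by rewrite -PN_scal /PN; apply: sum_n_ext => n; rewrite /enum_fun; case: pickle_inv => [x|] /=; ring.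
lra.
Qed.

Lemma PN_le_csum {f} N : summ f -> (forall x, 0 <= f x) -> PN f N <= csum f.
Proof.
move=> Hf H. rewrite csum_eqS //. apply: is_lim_seq_incr_compare.
  apply: (Series_correct _ (summ_ex Hf)).
move=> n. rewrite /PN sum_Sn /plus /=. have : 0 <= enum_fun T f (S n).
  rewrite /enum_fun; case: pickle_inv => // *; lra.
lra.
Qed.

Lemma le_PN {f} x : (forall x, 0 <= f x) -> f x <= PN f (pickle x).
Proof.
move=> H. rewrite /PN. have E : enum_fun T f (pickle x) = f x by rewrite /enum_fun pickleK_inv.
have Hn : forall n, 0 <= enum_fun T f n by move=> n; rewrite /enum_fun; case: pickle_inv => // *; lra.
case: (pickle x) E => [|n] E; first by rewrite sum_O E; lra.
rewrite sum_Sn /plus /= E. have := PN_nonneg n H. rewrite /PN. lra.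
Qed.

Lemma le_csum {f} x : summ f -> (forall x, 0 <= f x) -> f x <= csum f.
Proof. move=> Hf H. apply: Rle_trans (le_PN x H) (PN_le_csum _ Hf H). Qed.

Lemma bounded_summ {f} M : (forall x, 0 <= f x) -> (forall N, PN f N <= M) ->
  summ f /\ csum f <= M.
Proof.
move=> H HN.
have Hn : forall n, 0 <= enum_fun T f n by move=> n; rewrite /enum_fun; case: pickle_inv => // *; lra.
have Hinc : forall n, sum_n (enum_fun T f) n <= sum_n (enum_fun T f) (S n).
  move=> n; rewrite sum_Sn /plus /=; have := Hn (S n); lra.
have [l Hl] := ex_finite_lim_seq_incr _ M Hinc HN.
have Hex : ex_series (enum_fun T f) by exists l.
have Hs : summ f.
  rewrite /summ; apply: ex_series_ext Hex => n. rewrite Rabs_pos_eq //.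
split=> //. rewrite csum_eq //.
have HL : is_lim_seq (PN f) (Series (enum_fun T f)) := Series_correct _ Hex.
have := is_lim_seq_le _ _ _ _ HN HL (is_lim_seq_const M). done.
Qed.

End Base.

Lemma PN_csum {T U : countType} (F : U -> T -> R) N :
  (forall y, summ (F y)) ->
  PN (fun y => csum (F y)) N = csum (fun x => PN (fun y => F y x) N)
  /\ summ (fun x => PN (fun y => F y x) N).
Proof.
move=> HF.
have E : forall n, enum_fun U (fun y => csum (F y)) n = csum (fun x => enum_fun U (fun y => F y x) n).
  move=> n; rewrite /enum_fun; case: pickle_inv => [y|] //. by rewrite csum0.
have S1 : forall n, summ (fun x => enum_fun U (fun y => F y x) n).
  move=> n; rewrite /enum_fun; case: pickle_inv => [y|] //. exact: summ0.
rewrite /PN. elim: N => [|N [IH1 IH2]].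
  rewrite !sum_O E. split. apply: csum_ext => x; by rewrite sum_O. move: (S1 0%nat). apply: summ_ext => x. by rewrite sum_O.
rewrite sum_Sn /plus /= IH1 E -csum_plus //.
split. apply: csum_ext => x; by rewrite sum_Sn.
apply: (summ_ext _ (summ_plus IH2 (S1 (S N)))) => x; by rewrite sum_Sn.
Qed.


Lemma wsum {T : countType} (w g : T -> R) M : (forall x, 0 <= w x) -> summ w -> 0 <= M ->
  (forall x, Rabs (g x) <= M) ->
  summ (fun x => w x * g x) /\ Rabs (csum (fun x => w x * g x)) <= M * csum w.
Proof.
move=> Hw Sw HM Hg.
have D : forall x, Rabs (w x * g x) <= M * w x.
  move=> x; rewrite Rabs_mult Rabs_pos_eq //. rewrite Rmult_comm. apply: Rmult_le_compat_r => //.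
have Sg := summ_dom D (summ_scal M Sw).
split=> //. rewrite -csum_scal //. exact: csum_abs_le (summ_scal M Sw) D.
Qed.

Lemma wsum_nonneg {T : countType} (w g : T -> R) : (forall x, 0 <= w x) -> (forall x, 0 <= g x) ->
  summ (fun x => w x * g x) -> 0 <= csum (fun x => w x * g x).
Proof. move=> Hw Hg S. apply: csum_nonneg S _ => x. exact: Rmult_le_pos. Qed.

Lemma dist_facts {T : countType} (mu : T -> R) : is_dist mu ->
  (forall x, 0 <= mu x) /\ summ mu /\ csum mu = 1.
Proof.
move=> [H0 H1]. move/is_series_Reals: H1 => H1.
have Ex : ex_series (enum_fun T mu) by exists 1.
have Sm : summ mu.
  rewrite /summ; apply: ex_series_ext Ex => n. rewrite Rabs_pos_eq //.
  rewrite /enum_fun; case: pickle_inv => // *; lra.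
split=> //; split=> //. rewrite csum_eq //. exact: is_series_unique.
Qed.

Lemma dist_le1 {T : countType} (mu : T -> R) x : is_dist mu -> 0 <= mu x <= 1.
Proof.
move=> /dist_facts [H0 [Sm C]]. split=> //. rewrite -C. exact: le_csum.
Qed.

Lemma tv_facts {T : countType} (mu nu : T -> R) : is_dist mu -> is_dist nu ->
  summ (fun x => Rabs (mu x - nu x)) /\ 0 <= csum (fun x => Rabs (mu x - nu x)) <= 2.
Proof.
move=> /dist_facts [H0 [Sm C]] /dist_facts [H0' [Sm' C']].
have D : forall x, Rabs (Rabs (mu x - nu x)) <= mu x + nu x.
  move=> x; rewrite Rabs_Rabsolu. apply: Rle_trans (Rabs_triang _ _) _.
  rewrite Rabs_Ropp !Rabs_pos_eq //; lra.
have Sp := summ_plus Sm Sm'.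
have S1 := summ_dom D Sp. split=> //. split.
  apply: csum_nonneg S1 _ => x; apply Rabs_pos.
have := csum_le S1 Sp (fun x => Rle_trans _ _ _ (Rle_abs _) (D x)).
rewrite csum_plus //; lra.
Qed.

Lemma DTV_facts {T : countType} (mu nu : T -> R) : is_dist mu -> is_dist nu ->
  0 <= D_TV mu nu <= 1.
Proof. move=> H1 H2. have [_ [? ?]] := tv_facts _ _ H1 H2. rewrite /D_TV. lra. Qed.

Lemma DTV_sym {T : countType} (mu nu : T -> R) : D_TV mu nu = D_TV nu mu.
Proof. rewrite /D_TV. f_equal. apply: csum_ext => x. apply: Rabs_minus_sym. Qed.

Section MDP.
Context {St Ac : countType}.

Definition subd (d : St -> R) := (forall x, 0 <= d x) /\ summ d /\ csum d <= 1.

Definition step (d : St -> R) (pi : St -> Ac -> R) (q : St -> Ac -> St -> R) : St -> R :=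
  fun s' => csum (fun s => d s * csum (fun a => pi s a * q s a s')).

Lemma inner_facts (pi : St -> Ac -> R) (q : St -> Ac -> St -> R) (s s' : St) : is_policy pi -> is_kernel q ->
  summ (fun a => pi s a * q s a s') /\ 0 <= csum (fun a => pi s a * q s a s') <= 1.
Proof.
move=> Hp Hq. have [P0 [PS PC]] := dist_facts _ (Hp s).
have [W1 W2] := wsum (pi s) (fun a => q s a s') 1 P0 PS ltac:(lra)
  (fun a => ltac:(have := dist_le1 _ s' (Hq s a); move=> [? ?]; rewrite Rabs_pos_eq; lra)).
split=> //. split.
  apply: wsum_nonneg => // a. by have [] := dist_le1 _ s' (Hq s a).
have := Rle_abs (csum (fun a => pi s a * q s a s')). rewrite PC in W2. lra.
Qed.

Lemma step_subd (d : St -> R) (pi : St -> Ac -> R) (q : St -> Ac -> St -> R) : subd d -> is_policy pi -> is_kernel q -> subd (step d pi q).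
Proof.
move=> [D0 [DS DC]] Hp Hq.
have Hin := fun s s' => @inner_facts pi q s s' Hp Hq.
have HW : forall s', summ (fun s => d s * csum (fun a => pi s a * q s a s')) /\
   Rabs (csum (fun s => d s * csum (fun a => pi s a * q s a s'))) <= 1 * csum d.
  move=> s'. apply: wsum => //; first lra.
  move=> s; have [_ ?] := Hin s s'; rewrite Rabs_pos_eq; lra.
have Hnn : forall s', 0 <= step d pi q s'.
  move=> s'. apply: wsum_nonneg => //; first by move=> s; have [_ []] := Hin s s'.
  exact: (proj1 (HW s')).
suff [? ?] : summ (step d pi q) /\ csum (step d pi q) <= 1 by split.
apply: bounded_summ => // N.
have [E1 _] := PN_csum (fun s' s => d s * csum (fun a => pi s a * q s a s')) N
   (fun s' => proj1 (HW s')).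
rewrite /step E1.
have E2 : forall s, PN (fun s' => d s * csum (fun a => pi s a * q s a s')) N =
   d s * csum (fun a => pi s a * PN (q s a) N).
  move=> s. rewrite PN_scal. f_equal.
  have [E3 _] := PN_csum (fun s' a => pi s a * q s a s') N (fun s' => proj1 (Hin s s')).
  rewrite E3. apply: csum_ext => a. by rewrite PN_scal.
rewrite (csum_ext _ _ E2).
have Hy : forall s, Rabs (csum (fun a => pi s a * PN (q s a) N)) <= 1.
  move=> s. have [P0 [PS PC]] := dist_facts _ (Hp s).
  have [_ W] := wsum (pi s) (fun a => PN (q s a) N) 1 P0 PS ltac:(lra)
    (fun a => ltac:(have [Q0 [QS QC]] := dist_facts _ (Hq s a);
       have := PN_le_csum N QS Q0; have := PN_nonneg N Q0; rewrite QC => ? ?;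
       rewrite Rabs_pos_eq; lra)).
  rewrite PC in W; lra.
have [_ W] := wsum d (fun s => csum (fun a => pi s a * PN (q s a) N)) 1 D0 DS ltac:(lra) Hy.
have := Rle_abs (csum (fun s => d s * csum (fun a => pi s a * PN (q s a) N))). nra.
Qed.


Definition dist (d d' : St -> R) := csum (fun s => Rabs (d s - d' s)).

Lemma step_inner d (pi : St -> Ac -> R) q s' : subd d -> is_policy pi -> is_kernel q ->
  summ (fun s => d s * csum (fun a => pi s a * q s a s')).
Proof.
move=> [D0 [DS DC]] Hp Hq.
have [] // := wsum d (fun s => csum (fun a => pi s a * q s a s')) 1 D0 DS ltac:(lra).
move=> s; have [_ ?] := @inner_facts pi q s s' Hp Hq; rewrite Rabs_pos_eq; lra.
Qed.

Lemma subd_dist (mu : St -> R) : is_dist mu -> subd mu.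
Proof. move=> /dist_facts [? [? ?]]. split=> //; split=> //; lra. Qed.

Lemma abs_diff_summ {T : countType} {f g : T -> R} : summ f -> summ g -> summ (fun x => Rabs (f x - g x)).
Proof. move=> Hf Hg. exact: summ_abs (summ_minus Hf Hg). Qed.

Lemma expect_bound {d} {pi : St -> Ac -> R} {f M} : subd d -> is_policy pi -> 0 <= M ->
  (forall s a, Rabs (f s a) <= M) ->
  (forall s, summ (fun a => pi s a * f s a) /\ Rabs (csum (fun a => pi s a * f s a)) <= M) /\
  summ (fun s => d s * csum (fun a => pi s a * f s a)) /\ Rabs (expect_sa d pi f) <= M.
Proof.
move=> [D0 [DS DC]] Hp HM Hf.
have Hi : forall s, summ (fun a => pi s a * f s a) /\ Rabs (csum (fun a => pi s a * f s a)) <= M.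
  move=> s. have [P0 [PS PC]] := dist_facts _ (Hp s).
  have [? W] := wsum (pi s) (f s) M P0 PS HM (Hf s). rewrite PC in W. split=> //; lra.
split=> //.
have [? W] := wsum d (fun s => csum (fun a => pi s a * f s a)) M D0 DS HM (fun s => proj2 (Hi s)).
split=> //. rewrite /expect_sa. have := csum_nonneg DS D0. nra.
Qed.

Lemma expect_diff d d' (pi pi' : St -> Ac -> R) f M :
  subd d -> subd d' -> is_policy pi -> is_policy pi' -> 0 <= M ->
  (forall s a, Rabs (f s a) <= M) ->
  Rabs (expect_sa d pi f - expect_sa d' pi' f) <=
  M * (dist d d' + csum (fun s => d' s * csum (fun a => Rabs (pi s a - pi' s a)))).
Proof.
move=> Hd Hd' Hp Hp' HM Hf.
have [Hi [Si _]] := expect_bound Hd Hp HM Hf.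
have [Hi' [Si' _]] := expect_bound Hd' Hp' HM Hf.
have [D0 [DS DC]] := Hd. have [D0' [DS' DC']] := Hd'.
set Tp := fun s => csum (fun a => Rabs (pi s a - pi' s a)).
have HT : forall s, summ (fun a => Rabs (pi s a - pi' s a)) /\ 0 <= Tp s <= 2.
  move=> s. exact: tv_facts _ _ (Hp s) (Hp' s).
have HX : forall s, Rabs (csum (fun a => pi s a * f s a) - csum (fun a => pi' s a * f s a)) <= M * Tp s.
  move=> s. have [S1 _] := Hi s. have [S2 _] := Hi' s.
  rewrite -csum_minus //. rewrite /Tp -csum_scal; last exact: (proj1 (HT s)).
  apply: csum_abs_le; [exact: summ_minus | exact: summ_scal (proj1 (HT s)) |].
  move=> a. have -> : pi s a * f s a - pi' s a * f s a = (pi s a - pi' s a) * f s a by ring.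
  rewrite Rabs_mult Rmult_comm. apply: Rmult_le_compat_r; [apply Rabs_pos | exact: Hf].
have ST : summ (fun s => d' s * Tp s).
  have [] // := wsum d' Tp 2 D0' DS' ltac:(lra).
  move=> s; have [_ ?] := HT s; rewrite Rabs_pos_eq; lra.
have SD := abs_diff_summ DS DS'.
rewrite /expect_sa -csum_minus //.
have SG : summ (fun s => M * Rabs (d s - d' s) + M * (d' s * Tp s)).
  exact: summ_plus (summ_scal M SD) (summ_scal M ST).
apply: Rle_trans (csum_abs_le (summ_minus Si Si') SG _) _.
  move=> s. set X := csum (fun a => pi s a * f s a). set X' := csum (fun a => pi' s a * f s a).
  have E : d s * X - d' s * X' = (d s - d' s) * X + d' s * (X - X') by ring.
  rewrite E. apply: Rle_trans (Rabs_triang _ _) _. rewrite !Rabs_mult (Rabs_pos_eq (d' s)) //.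
  have := proj2 (Hi s). have := HX s. have := Rabs_pos (d s - d' s). have := D0' s.
  rewrite -/X -/X'. move=> h1 h2 h3 h4. apply: Rplus_le_compat.
    rewrite Rmult_comm. apply: Rmult_le_compat_r => //.
  have -> : M * (d' s * Tp s) = d' s * (M * Tp s) by ring. apply: Rmult_le_compat_l => //.
rewrite csum_plus; [|exact: summ_scal SD|exact: summ_scal ST].
rewrite !csum_scal // /dist /Tp. lra.
Qed.


Lemma Tq_facts (pi' : St -> Ac -> R) q q' s : is_policy pi' -> is_kernel q -> is_kernel q' ->
  summ (fun a => pi' s a * csum (fun s' => Rabs (q s a s' - q' s a s'))) /\
  0 <= csum (fun a => pi' s a * csum (fun s' => Rabs (q s a s' - q' s a s'))) <= 2.
Proof.
move=> Hp Hq Hq'. have [P0 [PS PC]] := dist_facts _ (Hp s).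
have HT : forall a, 0 <= csum (fun s' => Rabs (q s a s' - q' s a s')) <= 2.
  move=> a; exact: (proj2 (tv_facts _ _ (Hq s a) (Hq' s a))).
have [S1 W] := wsum (pi' s) (fun a => csum (fun s' => Rabs (q s a s' - q' s a s'))) 2 P0 PS
  ltac:(lra) (fun a => ltac:(have := HT a; move=> [? ?]; rewrite Rabs_pos_eq; lra)).
split=> //. rewrite PC in W. split; last by have := Rle_abs (csum (fun a => pi' s a * csum (fun s' => Rabs (q s a s' - q' s a s')))); lra.
apply: wsum_nonneg S1 => // a. by have [] := HT a.
Qed.

Lemma per_s (x y : R) (pi pi' : St -> Ac -> R) q q' s N : 0 <= x -> 0 <= y ->
  is_policy pi -> is_policy pi' -> is_kernel q -> is_kernel q' ->
  PN (fun s' => Rabs (x * csum (fun a => pi s a * q s a s') - y * csum (fun a => pi' s a * q' s a s'))) N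
  <= Rabs (x - y) + y * csum (fun a => Rabs (pi s a - pi' s a))
     + y * csum (fun a => pi' s a * csum (fun s' => Rabs (q s a s' - q' s a s'))).
Proof.
move=> Hx Hy Hp Hp' Hq Hq'.
have I1 := fun s' => proj1 (@inner_facts pi q s s' Hp Hq).
have I2 := fun s' => proj1 (@inner_facts pi' q' s s' Hp' Hq').
set G := fun s' a => x * (pi s a * q s a s') - y * (pi' s a * q' s a s').
have SG : forall s', summ (G s') := fun s' => summ_minus (summ_scal x (I1 s')) (summ_scal y (I2 s')).
have E : forall s', x * csum (fun a => pi s a * q s a s') - y * csum (fun a => pi' s a * q' s a s') = csum (G s').
  move=> s'. rewrite /G csum_minus; [|exact: summ_scal (I1 s')|exact: summ_scal (I2 s')].
  by rewrite !csum_scal.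
apply: Rle_trans (PN_le (g := fun s' => csum (fun a => Rabs (G s' a))) N _) _.
  move=> s'. rewrite E. exact: csum_abs (SG s').
have [E2 S2] := PN_csum (fun s' a => Rabs (G s' a)) N (fun s' => summ_abs (SG s')).
rewrite E2.
have [P0 [PS PC]] := dist_facts _ (Hp s). have [P0' [PS' PC']] := dist_facts _ (Hp' s).
set Tq := fun a => csum (fun s' => Rabs (q s a s' - q' s a s')).
set H := fun a => Rabs (x * pi s a - y * pi' s a) + y * (pi' s a * Tq a).
have [STq HTq] := @Tq_facts pi' q q' s Hp' Hq Hq'.
have SH : summ H.
  apply: summ_plus; first exact: (@abs_diff_summ _ (fun a => x * pi s a) (fun a => y * pi' s a) (summ_scal x PS) (summ_scal y PS')).
  exact: (summ_scal y (f:=fun a => pi' s a * Tq a) STq).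
have Step3 : forall a, PN (fun s' => Rabs (G s' a)) N <= H a.
  move=> a. have [Q0 [QS QC]] := dist_facts _ (Hq s a).
  have [TS [T0 T2]] := tv_facts _ _ (Hq s a) (Hq' s a).
  have K : forall s', Rabs (G s' a) <= Rabs (x * pi s a - y * pi' s a) * q s a s'
        + (y * pi' s a) * Rabs (q s a s' - q' s a s').
    move=> s'. rewrite /G.
    have -> : x * (pi s a * q s a s') - y * (pi' s a * q' s a s') =
       (x * pi s a - y * pi' s a) * q s a s' + (y * pi' s a) * (q s a s' - q' s a s') by ring.
    apply: Rle_trans (Rabs_triang _ _) _. rewrite Rabs_mult (Rabs_pos_eq (q s a s')) //.
    rewrite Rabs_mult (Rabs_pos_eq (y * pi' s a)); [lra | exact: Rmult_le_pos].
  apply: Rle_trans (PN_le N K) _. rewrite PN_plus.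
  have -> : PN (fun s' => Rabs (x * pi s a - y * pi' s a) * q s a s') N =
     Rabs (x * pi s a - y * pi' s a) * PN (q s a) N by rewrite PN_scal.
  rewrite PN_scal.
  have h1 := PN_le_csum N QS Q0. rewrite QC in h1.
  have h2 := PN_le_csum N TS (fun s' => Rabs_pos _).
  have h3 := Rabs_pos (x * pi s a - y * pi' s a).
  have h4 : 0 <= y * pi' s a by apply: Rmult_le_pos.
  rewrite /H /Tq. apply: Rplus_le_compat.
    have := Rmult_le_compat_l _ _ _ h3 h1. lra.
  have := Rmult_le_compat_l _ _ _ h4 h2. lra.
apply: Rle_trans (csum_le S2 SH Step3) _.
rewrite /H csum_plus; [|exact: (@abs_diff_summ _ (fun a => x * pi s a) (fun a => y * pi' s a) (summ_scal x PS) (summ_scal y PS'))|exact: (summ_scal y (f:=fun a => pi' s a * Tq a) STq)].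
rewrite csum_scal //.
suff : csum (fun a => Rabs (x * pi s a - y * pi' s a)) <= Rabs (x - y) + y * csum (fun a => Rabs (pi s a - pi' s a)).
  rewrite /Tq; lra.
have [TP _] := tv_facts _ _ (Hp s) (Hp' s).
have SR : summ (fun a => Rabs (x - y) * pi s a + y * Rabs (pi s a - pi' s a)).
  exact: summ_plus (summ_scal _ PS) (summ_scal _ TP).
apply: Rle_trans (csum_le ((@abs_diff_summ _ (fun a => x * pi s a) (fun a => y * pi' s a) (summ_scal x PS) (summ_scal y PS'))) SR _) _.
  move=> a. have -> : x * pi s a - y * pi' s a = (x - y) * pi s a + y * (pi s a - pi' s a) by ring.
  apply: Rle_trans (Rabs_triang _ _) _. rewrite !Rabs_mult (Rabs_pos_eq (pi s a)) // (Rabs_pos_eq y) //.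
  lra.
rewrite csum_plus; [|exact: summ_scal _ PS|exact: summ_scal _ TP].
rewrite !csum_scal // PC. lra.
Qed.


Lemma step_diff d d' (pi pi' : St -> Ac -> R) q q' :
  subd d -> subd d' -> is_policy pi -> is_policy pi' -> is_kernel q -> is_kernel q' ->
  dist (step d pi q) (step d' pi' q') <= dist d d'
    + csum (fun s => d' s * csum (fun a => Rabs (pi s a - pi' s a)))
    + csum (fun s => d' s * csum (fun a => pi' s a * csum (fun s' => Rabs (q s a s' - q' s a s')))).
Proof.
move=> Hd Hd' Hp Hp' Hq Hq'.
have [D0 [DS DC]] := Hd. have [D0' [DS' DC']] := Hd'.
set B := fun s => Rabs (d s - d' s) + d' s * csum (fun a => Rabs (pi s a - pi' s a))
    + d' s * csum (fun a => pi' s a * csum (fun s' => Rabs (q s a s' - q' s a s'))).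
have S1 : summ (fun s => d' s * csum (fun a => Rabs (pi s a - pi' s a))).
  have [] // := wsum d' (fun s => csum (fun a => Rabs (pi s a - pi' s a))) 2 D0' DS' ltac:(lra).
  move=> s; have [_ ?] := tv_facts _ _ (Hp s) (Hp' s); rewrite Rabs_pos_eq; lra.
have S2 : summ (fun s => d' s * csum (fun a => pi' s a * csum (fun s' => Rabs (q s a s' - q' s a s')))).
  have [] // := wsum d' (fun s => csum (fun a => pi' s a * csum (fun s' => Rabs (q s a s' - q' s a s')))) 2 D0' DS' ltac:(lra).
  move=> s; have [_ ?] := @Tq_facts pi' q q' s Hp' Hq Hq'; rewrite Rabs_pos_eq; lra.
have SB : summ B by apply: summ_plus; [apply: summ_plus => //; exact: abs_diff_summ|].
have Sin := fun s' => @step_inner d pi q s' Hd Hp Hq.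
have Sin' := fun s' => @step_inner d' pi' q' s' Hd' Hp' Hq'.
set F := fun s' s => Rabs (d s * csum (fun a => pi s a * q s a s') - d' s * csum (fun a => pi' s a * q' s a s')).
have SF : forall s', summ (F s') := fun s' => abs_diff_summ (Sin s') (Sin' s').
have HN : forall N, PN (fun s' => Rabs (step d pi q s' - step d' pi' q' s')) N <= csum B.
  move=> N.
  apply: Rle_trans (PN_le (g := fun s' => csum (F s')) N _) _.
    move=> s'. rewrite /step -csum_minus //. exact: csum_abs (summ_minus (Sin s') (Sin' s')).
  have [E2 S3] := PN_csum F N SF. rewrite E2.
  apply: csum_le => // s. rewrite /F /B.
  exact: per_s.
have [Sd Hb] := @bounded_summ _ (fun s' => Rabs (step d pi q s' - step d' pi' q' s')) (csum B)
  (fun s' => Rabs_pos _) HN.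
rewrite /dist. apply: Rle_trans Hb _. rewrite /B csum_plus; [|apply: summ_plus => //; exact: abs_diff_summ |done].
rewrite csum_plus //; last exact: abs_diff_summ. lra.
Qed.

End MDP.

Lemma eps_series (u : nat -> R) : ex_series u ->
  epsilon (inhabits 0) (fun l => infinite_sum u l) = Series u.
Proof.
move=> H.
have Hs : infinite_sum u (Series u) by apply/is_series_Reals; exact: Series_correct.
have := epsilon_spec (inhabits 0) (fun l => infinite_sum u l) (ex_intro _ _ Hs).
move=> /is_series_Reals H2. by rewrite (is_series_unique _ _ H2).
Qed.

Lemma geom_closed (g rm c e : R) N : g <> 1 ->
  sum_n (fun t => g ^ t * (rm * (2 * c * INR t + 4 * e))) N =
  rm * (2 * c * ((g - INR (Datatypes.S N) * g ^ (Datatypes.S N) + INR N * g ^ (Datatypes.S (Datatypes.S N))) / (1 - g) ^ 2)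
        + 4 * e * ((1 - g ^ (Datatypes.S N)) / (1 - g))).
Proof.
move=> Hg. have Hg' : 1 - g <> 0 by lra.
elim: N => [|N IH].
  rewrite sum_O /=. match goal with |- ?a = ?b => change (@eq R a b) end. field. done.
have Pl : forall x y : R, plus x y = x + y by []. rewrite sum_Sn IH Pl !S_INR -!tech_pow_Rmult. match goal with |- ?a = ?b => change (@eq R a b) end. field. done.
Qed.

Lemma geom_bound (g rm c e : R) N : 0 < g < 1 -> 0 <= rm -> 0 <= c -> 0 <= e ->
  sum_n (fun t => g ^ t * (rm * (2 * c * INR t + 4 * e))) N <=
  2 * g * rm * c / (1 - g) ^ 2 + 4 * rm * e / (1 - g).
Proof.
move=> Hg Hr Hc He. rewrite geom_closed; last lra.
have Hp : 0 <= g ^ (Datatypes.S N) by apply: pow_le; lra.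
have HN := pos_INR N.
have h1 : (g - INR (Datatypes.S N) * g ^ (Datatypes.S N) + INR N * g ^ (Datatypes.S (Datatypes.S N))) / (1 - g) ^ 2
   <= g / (1 - g) ^ 2.
  apply: Rmult_le_compat_r. apply: Rlt_le. apply: Rinv_0_lt_compat. apply: pow_lt. lra.
  rewrite S_INR. have E : g ^ Datatypes.S (Datatypes.S N) = g * g ^ Datatypes.S N by [].
  rewrite E. have h3 : 0 <= INR N * g ^ Datatypes.S N * (1 - g).
    apply: Rmult_le_pos; [exact: Rmult_le_pos | lra].
  lra.
have h2 : (1 - g ^ (Datatypes.S N)) / (1 - g) <= 1 / (1 - g).
  apply: Rmult_le_compat_r. apply: Rlt_le. apply: Rinv_0_lt_compat. lra. lra.
have : rm * (2 * c * ((g - INR (Datatypes.S N) * g ^ (Datatypes.S N) + INR N * g ^ (Datatypes.S (Datatypes.S N))) / (1 - g) ^ 2)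
        + 4 * e * ((1 - g ^ (Datatypes.S N)) / (1 - g))) <= rm * (2 * c * (g / (1 - g) ^ 2) + 4 * e * (1 / (1 - g))).
  apply: Rmult_le_compat_l => //. apply: Rplus_le_compat.
    apply: Rmult_le_compat_l => //; lra.
  apply: Rmult_le_compat_l => //; lra.
move=> H. apply: Rle_trans H _. right. field. lra.
Qed.

Lemma abs_le (x b : R) : Rabs x <= b -> - b <= x <= b.
Proof. move=> H; split; [have := Rle_abs (-x); rewrite Rabs_Ropp | have := Rle_abs x]; lra. Qed.

Arguments step_diff {St Ac d d' pi pi' q q'}.
Arguments expect_diff {St Ac d d' pi pi' f M}.
Section Main.
Context {St Ac : countType}.

Lemma expect_nonneg (d : St -> R) (pi : St -> Ac -> R) f M : subd d -> is_policy pi -> 0 <= M ->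
  (forall s a, 0 <= f s a <= M) -> 0 <= expect_sa d pi f.
Proof.
move=> Hd Hp HM Hf.
have [Hi [Si _]] := expect_bound (f:=f) (M:=M) Hd Hp HM (fun s a => ltac:(have := Hf s a; move=> [? ?]; rewrite Rabs_pos_eq; lra)).
have [D0 _] := Hd.
apply: csum_nonneg Si _ => s. apply: Rmult_le_pos => //.
have [P0 _] := dist_facts _ (Hp s).
apply: csum_nonneg (proj1 (Hi s)) _ => a. apply: Rmult_le_pos => //. by have [] := Hf s a.
Qed.

Lemma tp_bound (d : St -> R) (pi pi' : St -> Ac -> R) e : subd d -> is_policy pi -> is_policy pi' ->
  (forall s, D_TV (pi' s) (pi s) <= e) -> 0 <= e ->
  csum (fun s => d s * csum (fun a => Rabs (pi s a - pi' s a))) <= 2 * e.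
Proof.
move=> [D0 [DS DC]] Hp Hp' He He0.
have [_ W] := wsum d (fun s => csum (fun a => Rabs (pi s a - pi' s a))) (2 * e) D0 DS ltac:(lra)
  (fun s => ltac:(have [_ [h1 h2]] := tv_facts _ _ (Hp s) (Hp' s);
     have := He s; rewrite DTV_sym /D_TV => h3; rewrite Rabs_pos_eq; lra)).
have := Rle_abs (csum (fun s => d s * csum (fun a => Rabs (pi s a - pi' s a)))).
have := Rmult_le_compat_l _ _ _ (ltac:(lra) : 0 <= 2 * e) DC. lra.
Qed.

Lemma tq_zero (d : St -> R) (pi : St -> Ac -> R) q :
  csum (fun s => d s * csum (fun a => pi s a * csum (fun s' : St => Rabs (q s a s' - q s a s')))) = 0.
Proof.
have Z : forall s a, csum (fun s' : St => Rabs (q s a s' - q s a s')) = 0.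
  move=> s a. rewrite -(csum0 (T:=St)). apply: csum_ext => s'. rewrite Rminus_diag Rabs_R0 //.
rewrite -(csum0 (T:=St)). apply: csum_ext => s. rewrite -[RHS](Rmult_0_r (d s)). f_equal.
rewrite -(csum0 (T:=Ac)). apply: csum_ext => a. rewrite Z. ring.
Qed.

Lemma tq_expect (d : St -> R) (pi : St -> Ac -> R) q q' : subd d -> is_policy pi -> is_kernel q -> is_kernel q' ->
  csum (fun s => d s * csum (fun a => pi s a * csum (fun s' => Rabs (q s a s' - q' s a s'))))
  = 2 * expect_sa d pi (fun s a => D_TV (q' s a) (q s a)).
Proof.
move=> Hd Hp Hq Hq'.
have Hf : forall s a, Rabs (D_TV (q' s a) (q s a)) <= 1.
  move=> s a; have := DTV_facts _ _ (Hq' s a) (Hq s a); move=> [? ?]; rewrite Rabs_pos_eq; lra.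
have [Hi [Si _]] := expect_bound (M:=1) Hd Hp ltac:(lra) Hf.
rewrite /expect_sa -csum_scal //. apply: csum_ext => s.
have -> : csum (fun a => pi s a * csum (fun s' => Rabs (q s a s' - q' s a s'))) =
  csum (fun a => 2 * (pi s a * D_TV (q' s a) (q s a))).
  apply: csum_ext => a. rewrite /D_TV.
  rewrite (csum_ext (fun s' => Rabs (q' s a s' - q s a s')) (fun s' => Rabs (q s a s' - q' s a s'))).
    field.
  move=> s'; exact: Rabs_minus_sym.
rewrite csum_scal; [ring | exact: (proj1 (Hi s))].
Qed.


Lemma marg_subd rho0 (pol : St -> Ac -> R) q t : is_dist rho0 -> is_policy pol -> is_kernel q ->
  subd (state_marg rho0 pol q t).
Proof.
move=> H0 Hp Hq. elim: t => [|t IH]; first exact: subd_dist.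
change (subd (step (state_marg rho0 pol q t) pol q)). exact: (step_subd _ _ _ IH Hp Hq).
Qed.

Lemma dist_self (d : St -> R) : dist d d = 0.
Proof. rewrite /dist -(csum0 (T:=St)). apply: csum_ext => s. by rewrite Rminus_diag Rabs_R0. Qed.

Lemma main (rho0 : St -> R) (gamma rmax : R)
  (r : St -> Ac -> R) (p phat : St -> Ac -> St -> R) (piD pi : St -> Ac -> R)
  (eps_m eps_pi : R) :
  is_dist rho0 ->
  0 < gamma < 1 ->
  (forall s a, Rabs (r s a) <= rmax) ->
  is_kernel p -> is_kernel phat ->
  is_policy piD -> is_policy pi ->
  (forall t : nat,
     expect_sa (state_marg rho0 piD p t) piD (fun s a => D_TV (p s a) (phat s a))
     <= eps_m) ->
  (forall s : St, D_TV (piD s) (pi s) <= eps_pi) ->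
  ret rho0 gamma r pi p >=
    ret rho0 gamma r pi phat
    - 2 * gamma * rmax * (eps_m + 2 * eps_pi) / (1 - gamma) ^ 2
    - 4 * rmax * eps_pi / (1 - gamma).
Proof.
move=> Hrho Hg Hr Hp Hph HpD Hpi Hm Hpe.
have [s0 _] : exists s : St, True.
  apply: NNPP => Hn. have [_ [_ C]] := dist_facts _ Hrho.
  have E : csum rho0 = csum (fun _ : St => 0).
    apply: csum_ext => x; exfalso; apply: Hn; by exists x.
  rewrite csum0 C in E. lra.
have [a0 _] : exists a : Ac, True.
  apply: NNPP => Hn. have [_ [_ C]] := dist_facts _ (HpD s0).
  have E : csum (piD s0) = csum (fun _ : Ac => 0).
    apply: csum_ext => x; exfalso; apply: Hn; by exists x.
  rewrite csum0 C in E. lra.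
have Hrm : 0 <= rmax := Rle_trans _ _ _ (Rabs_pos _) (Hr s0 a0).
have Hep : 0 <= eps_pi := Rle_trans _ _ _ (proj1 (DTV_facts _ _ (HpD s0) (Hpi s0))) (Hpe s0).
have M1 := fun t => marg_subd _ _ _ t Hrho Hpi Hp.
have M2 := fun t => marg_subd _ _ _ t Hrho HpD Hp.
have M3 := fun t => marg_subd _ _ _ t Hrho Hpi Hph.
have Hem : 0 <= eps_m.
  apply: Rle_trans (Hm 0%nat). apply: (expect_nonneg _ _ _ 1 (M2 0%nat) HpD) => //; first lra.
  move=> s a. exact: DTV_facts (Hp s a) (Hph s a).
have Htp : forall t, csum (fun s => state_marg rho0 piD p t s * csum (fun a => Rabs (pi s a - piD s a))) <= 2 * eps_pi.
  move=> t. exact: tp_bound _ _ _ _ (M2 t) Hpi HpD Hpe Hep.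
have D1 : forall t, dist (state_marg rho0 pi p t) (state_marg rho0 piD p t) <= 2 * INR t * eps_pi.
  elim=> [|t IH]; first by rewrite dist_self /=; lra.
  apply: Rle_trans (step_diff (M1 t) (M2 t) Hpi HpD Hp Hp) _.
  rewrite tq_zero S_INR. have := Htp t. lra.
have D2 : forall t, dist (state_marg rho0 pi phat t) (state_marg rho0 piD p t) <= 2 * INR t * (eps_pi + eps_m).
  elim=> [|t IH]; first by rewrite dist_self /=; lra.
  apply: Rle_trans (step_diff (M3 t) (M2 t) Hpi HpD Hph Hp) _.
  rewrite (tq_expect _ _ _ _ (M2 t) HpD Hph Hp) S_INR. have := Htp t. have := Hm t. lra.
set c := eps_m + 2 * eps_pi.
have Hc : 0 <= c by rewrite /c; lra.
set w := fun t => gamma ^ t * (rmax * (2 * c * INR t + 4 * eps_pi)).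
have HE : forall t, - (rmax * (2 * c * INR t + 4 * eps_pi)) <=
   expect_sa (state_marg rho0 pi p t) pi r - expect_sa (state_marg rho0 pi phat t) pi r.
  move=> t.
  have h1 := expect_diff (M1 t) (M2 t) Hpi HpD Hrm Hr.
  have h2 := expect_diff (M3 t) (M2 t) Hpi HpD Hrm Hr.
  have k1 := Rmult_le_compat_l _ _ _ Hrm (Rplus_le_compat _ _ _ _ (D1 t) (Htp t)).
  have k2 := Rmult_le_compat_l _ _ _ Hrm (Rplus_le_compat _ _ _ _ (D2 t) (Htp t)).
  have := abs_le _ _ (Rle_trans _ _ _ h1 k1). have := abs_le _ _ (Rle_trans _ _ _ h2 k2).
  rewrite /c. nra.
have Hb : forall (q : St -> Ac -> St -> R), is_kernel q -> forall t,
    Rabs (gamma ^ t * expect_sa (state_marg rho0 pi q t) pi r) <= rmax * gamma ^ t.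
  move=> q Hq t. have [_ [_ h]] := expect_bound (marg_subd _ _ _ t Hrho Hpi Hq) Hpi Hrm Hr.
  rewrite Rabs_mult Rabs_pos_eq; last by apply: pow_le; lra.
  rewrite Rmult_comm. apply: Rmult_le_compat_r => //. apply: pow_le; lra.
have Hgeo : ex_series (fun t => rmax * gamma ^ t).
  apply: (ex_series_scal_l (V := R_NormedModule) rmax). apply: ex_series_geom.
  rewrite Rabs_pos_eq; lra.
have Ex : forall (q : St -> Ac -> St -> R), is_kernel q ->
   ex_series (fun t => gamma ^ t * expect_sa (state_marg rho0 pi q t) pi r).
  move=> q Hq. apply: ex_series_le Hgeo. move=> t. exact: Hb q Hq t.
rewrite /ret !eps_series; try exact: Ex.
set u := fun t => gamma ^ t * expect_sa (state_marg rho0 pi p t) pi r -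
    gamma ^ t * expect_sa (state_marg rho0 pi phat t) pi r.
have Exu : ex_series u.
  apply: (ex_series_ext (fun n => plus (gamma ^ n * expect_sa (state_marg rho0 pi p n) pi r)
       (opp (gamma ^ n * expect_sa (state_marg rho0 pi phat n) pi r)))) => //.
  apply: ex_series_minus; exact: Ex.
have HN : forall N, - (2 * gamma * rmax * c / (1 - gamma) ^ 2 + 4 * rmax * eps_pi / (1 - gamma)) <= sum_n u N.
  move=> N. have Hw := geom_bound _ _ _ _ N Hg Hrm Hc Hep.
  have : sum_n (fun t => -1 * w t) N <= sum_n u N.
    apply: sum_n_le' => t. rewrite /u /w.
    have Hgt : 0 <= gamma ^ t by apply: pow_le; lra.
    have := Rmult_le_compat_l _ _ _ Hgt (HE t). lra.
  have -> : sum_n (fun t => -1 * w t) N = -1 * sum_n w N.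
    by have := sum_n_scal_l (-1) w N.
  rewrite /w in Hw |- *. lra.
have HL : is_lim_seq (sum_n u) (Series u) := Series_correct _ Exu.
have := is_lim_seq_le _ _ _ _ HN (is_lim_seq_const _) HL. rewrite /=.
rewrite /u Series_minus; [|exact: Ex|exact: Ex]. rewrite /c. lra.
Qed.

End Main.

Theorem theorem1 (S A : countType) (rho0 : S -> R) (gamma rmax : R)
  (r : S -> A -> R) (p phat : S -> A -> S -> R) (piD pi : S -> A -> R)
  (eps_m eps_pi : R) :
  is_dist rho0 ->
  0 < gamma < 1 ->
  (forall s a, Rabs (r s a) <= rmax) ->
  is_kernel p -> is_kernel phat ->
  is_policy piD -> is_policy pi ->
  (forall t : nat,
     expect_sa (state_marg rho0 piD p t) piD (fun s a => D_TV (p s a) (phat s a))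
     <= eps_m) ->
  (forall s : S, D_TV (piD s) (pi s) <= eps_pi) ->
  ret rho0 gamma r pi p >=
    ret rho0 gamma r pi phat
    - 2 * gamma * rmax * (eps_m + 2 * eps_pi) / (1 - gamma) ^ 2
    - 4 * rmax * eps_pi / (1 - gamma).
Proof. exact: main. Qed.
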